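(* Let $G$ be a graph, $X_C \subseteq V(G)$, $z \geq 0$, and let $H$ be an $X_C$-certificate of order $z$ in $G$. Then $H$ contains a subgraph $\hat{H}$ that is an $X_C$-certificate of order $z$ in $G$ such that $\hat{H} - X_C$ has at most $z^2 |X_C|$ connected components.
   Context: $\mathrm{oct}(H)$ denotes the minimum size of a set $S\subseteq V(H)$ with $H - S$ bipartite. For $X_C \subseteq V(G)$, an $X_C$-certificate of order $z$ is a subgraph $H$ of $G$ such that $H - X_C$ is bipartite, $\mathrm{oct}(H)=|X_C|$, and each connected component $H'$ of $H$ has $|X_C\cap V(H')|\le z$. *)

(* Defs.v *)
(* A graph G on a finite vertex type T is a symmetric,
   irreflexive relation e : rel T (vertex set = all of T).
   A subgraph is a pair (V, E) of a vertex set V : {set T} and a symmetric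
   edge relation E : rel T whose edges join vertices of V. *)
From mathcomp Require Import all_boot all_order.
Set Implicit Arguments. Unset Strict Implicit. Unset Printing Implicit Defensive.

Section Graphs.
Variable T : finType.

Definition simple_graph (e : rel T) : Prop := symmetric e /\ irreflexive e.

Definition subgraph_of (V0 : {set T}) (E0 : rel T) (V : {set T}) (E : rel T) : Prop :=
  V \subset V0 /\ symmetric E /\
  (forall x y, E x y -> [&& E0 x y, x \in V & y \in V]).

Definition restr (V : {set T}) (E : rel T) : rel T :=
  [rel x y | [&& E x y, x \in V & y \in V]].

Definition del_V (V : {set T}) (S : {set T}) : {set T} := V :\: S.
Definition del_E (V : {set T}) (E : rel T) (S : {set T}) : rel T := restr (V :\: S) E.

Definition bipartite (V : {set T}) (E : rel T) : bool :=
  [exists f : {ffun T -> bool},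
     [forall x in V, forall y in V, E x y ==> (f x != f y)]].

Definition oct (V : {set T}) (E : rel T) : nat :=
  \big[minn/#|T|]_(S : {set T} | (S \subset V) && bipartite (del_V V S) (del_E V E S)) #|S|.

Definition components (V : {set T}) (E : rel T) : {set {set T}} :=
  [set [set y in V | connect (restr V E) x y] | x in V].

Definition certificate (e : rel T) (XC : {set T}) (z : nat)
    (V : {set T}) (E : rel T) : Prop :=
  [/\ subgraph_of [set: T] e V E,
      bipartite (del_V V XC) (del_E V E XC),
      oct V E = #|XC| &
      forall C, C \in components V E -> #|XC :&: C| <= z].

End Graphs.

(* Main.v *)
Require Import Defs.
From mathcomp Require Import all_boot all_order.
Set Implicit Arguments. Unset Strict Implicit. Unset Printing Implicit Defensive.

Section Gen.
Variable T : finType.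

Lemma connect_inv (R : rel T) (W : pred T) (h : T -> bool) a b :
  (forall x y, R x y -> x \in W -> y \in W /\ h x = h y) ->
  a \in W -> connect R a b -> h b = h a /\ b \in W.
Proof.
move=> HR aW /connectP[p pth ->] {b}.
elim: p a aW pth => [|y p IH] a aW //=.
case/andP=> Ray pth; have [yW hay] := HR _ _ Ray aW.
by have [-> ->] := IH y yW pth; split.
Qed.

Lemma connect_transfer (R R' : rel T) (W : pred T) a b :
  (forall x y, R x y -> x \in W -> y \in W /\ R' x y) ->
  a \in W -> connect R a b -> connect R' a b.
Proof.
move=> HR aW /connectP[p pth ->] {b}.
elim: p a aW pth => [|y p IH] a aW //= /andP[Ray pth].
have [yW R'ay] := HR _ _ Ray aW.
exact: connect_trans (connect1 R'ay) (IH y yW pth).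
Qed.

Lemma oct_le (V : {set T}) (E : rel T) (S : {set T}) :
  S \subset V -> bipartite (del_V V S) (del_E V E S) -> oct V E <= #|S|.
Proof.
move=> SV bS; rewrite /oct -big_filter.
have: S \in [seq j : {set T} <- index_enum {set T} | (j \subset V) && bipartite (del_V V j) (del_E V E j)].
  by rewrite mem_filter SV bS mem_index_enum.
elim: (filter _ _) => //= j s IH; rewrite big_cons inE => /orP[/eqP<-|/IH h].
  exact: geq_minl.
exact: leq_trans (geq_minr _ _) h.
Qed.

Lemma oct_ge (V : {set T}) (E : rel T) n :
  (forall S : {set T}, S \subset V -> bipartite (del_V V S) (del_E V E S) -> n <= #|S|) ->
  n <= #|T| -> n <= oct V E.
Proof.
move=> H HT; rewrite /oct; elim/big_ind: _ => //.
  by move=> a b ha hb; rewrite leq_min ha hb.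
by move=> S /andP[SV bS]; apply: H.
Qed.

Lemma card_bigcup_le (I : finType) (P : pred I) (F : I -> {set T}) :
  #|\bigcup_(i | P i) F i| <= \sum_(i | P i) #|F i|.
Proof.
apply: (big_ind2 (fun (A : {set T}) n => #|A| <= n)) => //; first by rewrite cards0.
move=> A m B n hA hB; apply: leq_trans (leq_card_setU A B).1 _.
exact: leq_add.
Qed.

Definition cls (W : {set T}) (R : rel T) x := [set y in W | connect R x y].

Lemma cls_self (W : {set T}) R x : x \in W -> x \in cls W R x.
Proof. by move=> xW; rewrite inE xW connect0. Qed.

Lemma cls_sub W R x : cls W R x \subset W.
Proof. by apply/subsetP=> y; rewrite inE => /andP[]. Qed.

Lemma cls_eq (W : {set T}) (R : rel T) x y : connect_sym R ->
  y \in cls W R x -> cls W R y = cls W R x.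
Proof.
move=> sR; rewrite inE => /andP[yW cxy]; apply/setP=> t; rewrite !inE.
apply: andb_id2l => _; apply/idP/idP => h.
  exact: connect_trans cxy h.
by rewrite sR in cxy; exact: connect_trans cxy h.
Qed.

Lemma restr_sym (V : {set T}) (E : rel T) : symmetric E -> symmetric (restr V E).
Proof. by move=> sE x y; rewrite /restr /= sE; case: (E y x); rewrite //= andbC. Qed.

End Gen.


Section Main.
Variables (T : finType) (X : {set T}) (z : nat) (V : {set T}) (E : rel T).
Hypothesis sE : symmetric E.
Hypothesis EV : forall x y, E x y -> (x \in V) && (y \in V).
Hypothesis XV : X \subset V.
Hypothesis zb : forall C, C \in components V E -> #|X :&: C| <= z.
Variable f : {ffun T -> bool}.
Hypothesis fP : forall x y, x \in V :\: X -> y \in V :\: X -> E x y -> f x != f y.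

Definition RX := restr (V :\: X) (restr (V :\: X) E).
Definition RH := restr V E.
Definition cD := cls (V :\: X) RX.
Definition cH := cls V RH.
Definition compsHX := components (V :\: X) (restr (V :\: X) E).

Lemma RXE x y : RX x y = [&& E x y, x \in V :\: X & y \in V :\: X].
Proof. by rewrite /RX /restr /=; case: (E x y); case: (x \in _); case: (y \in _). Qed.

Lemma RHE x y : RH x y = E x y.
Proof.
rewrite /RH /restr /=; case Exy: (E x y) => //=.
by have /andP[-> ->] := EV Exy.
Qed.

Lemma RX_sym : connect_sym RX.
Proof. by apply: sym_connect_sym => x y; rewrite !RXE sE; case: (E y x); rewrite //= andbC. Qed.

Lemma RH_sym : connect_sym RH.
Proof. by apply: sym_connect_sym => x y; rewrite !RHE sE. Qed.

Lemma RX_RH : subrel (connect RX) (connect RH).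
Proof.
apply: connect_sub => x y; rewrite RXE => /andP[h _]; apply: connect1; by rewrite RHE.
Qed.

Lemma compsHXP D : D \in compsHX -> exists2 x, x \in V :\: X & D = cD x.
Proof. by case/imsetP=> x xV ->; exists x. Qed.

Lemma cD_in x : x \in V :\: X -> cD x \in compsHX.
Proof. by move=> xV; apply/imsetP; exists x. Qed.

Lemma cD_eq D y : D \in compsHX -> y \in D -> D = cD y.
Proof. by case/compsHXP=> x _ -> yD; rewrite /cD (cls_eq RX_sym yD). Qed.

Lemma cD_sub x : cD x \subset V :\: X.
Proof. exact: cls_sub. Qed.

Lemma compsHX_sub D : D \in compsHX -> D \subset V :\: X.
Proof. by case/compsHXP=> x _ ->; apply: cD_sub. Qed.

Lemma cD_edge x y : x \in V :\: X -> y \in V :\: X -> E x y -> cD y = cD x.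
Proof.
move=> xV yV Exy; rewrite /cD; apply: (cls_eq RX_sym).
by rewrite inE yV connect1 // RXE Exy xV yV.
Qed.

Lemma compsHX_edge D x y : D \in compsHX -> x \in D -> y \in V :\: X -> E x y -> y \in D.
Proof.
move=> DH xD yV Exy; have xV := subsetP (compsHX_sub DH) _ xD.
by rewrite (cD_eq DH xD) -(cD_edge xV yV Exy) cls_self.
Qed.

Lemma compsV_P C : C \in components V E -> exists2 x, x \in V & C = cH x.
Proof. by case/imsetP=> x xV ->; exists x. Qed.

Lemma cH_in x : x \in V -> cH x \in components V E.
Proof. by move=> xV; apply/imsetP; exists x. Qed.

Lemma cH_eq C y : C \in components V E -> y \in C -> C = cH y.
Proof. by case/compsV_P=> x _ -> yD; rewrite /cH (cls_eq RH_sym yD). Qed.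

Lemma comps_edge C x y : C \in components V E -> x \in C -> E x y -> y \in C.
Proof.
case/compsV_P=> c _ -> xC Exy; have /andP[_ yV] := EV Exy.
move: xC; rewrite !inE yV => /andP[_ cx]; apply: connect_trans cx _.
by apply: connect1; rewrite RHE.
Qed.

Lemma comps_D C D v : C \in components V E -> D \in compsHX -> v \in C -> v \in D ->
  D \subset C.
Proof.
move=> CH DH vC vD; rewrite (cD_eq DH vD) (cH_eq CH vC).
apply/subsetP=> y; rewrite !inE => /andP[/andP[_ yV] cvy]; rewrite yV.
exact: RX_RH.
Qed.


Definition p (a b : T) := (enum_rank b <= enum_rank a)%N.
Definition tag (D : {set T}) a b := [&& a \in X, b \in X &
  [exists ua in D, exists ub in D, [&& E a ua, E b ub & (f ua != f ub) == p a b]]].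
Definition A (ab : T * T) := [set D in compsHX | tag D ab.1 ab.2].
Definition B ab := [set D in take z (enum (A ab))].
Definition Tau := [set ab : T * T | (ab.1 \in X) && (ab.2 \in X :&: cH ab.1)].
Definition M := \bigcup_(ab in Tau) B ab.

Lemma p_refl a : p a a.
Proof. exact: leqnn. Qed.

Lemma p_anti a b : a != b -> p a b = ~~ p b a.
Proof.
move=> nab; rewrite /p -ltnNge ltn_neqAle andb_idl //.
by move=> _; apply: contra nab => /eqP/val_inj h; rewrite (enum_rank_inj h).
Qed.

Lemma tag_Tau D a b : D \in compsHX -> tag D a b -> (a, b) \in Tau.
Proof.
move=> DH /and3P[aX bX /existsP[ua /andP[uaD /existsP[ub /andP[ubD /and3P[Eaua Ebub _]]]]]].
rewrite inE /= aX inE bX /= inE.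
have /andP[aV _] := EV Eaua; have /andP[bV _] := EV Ebub.
rewrite bV /=; apply: connect_trans (connect1 _) _; first by rewrite RHE; exact: Eaua.
have c1 : connect RX ua ub by move: ubD; rewrite (cD_eq DH uaD) inE => /andP[].
by apply: connect_trans (RX_RH c1) _; apply: connect1; rewrite RHE sE.
Qed.

Lemma B_sub ab : B ab \subset A ab.
Proof. by apply/subsetP=> D; rewrite inE => /mem_take; rewrite mem_enum. Qed.

Lemma B_card ab : #|B ab| <= z.
Proof.
rewrite cardsE (card_uniqP _) ?take_uniq ?enum_uniq // size_take_min.
exact: geq_minl.
Qed.

Lemma B_full ab D : D \in A ab -> D \notin B ab -> #|B ab| = z.
Proof.
move=> DA DB; rewrite cardsE (card_uniqP _) ?take_uniq ?enum_uniq // size_take.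
case: ltnP => // hle; move: DB; rewrite inE take_oversize //.
by rewrite mem_enum DA.
Qed.

Lemma M_sub : M \subset compsHX.
Proof.
apply/bigcupsP=> ab _; apply: subset_trans (B_sub ab) _.
by apply/subsetP=> D; rewrite inE => /andP[].
Qed.

Lemma card_Tau : #|Tau| <= z * #|X|.
Proof.
have sub : Tau \subset \bigcup_(a in X) [set (a, b) | b in X :&: cH a].
  apply/subsetP=> [[a b]]; rewrite inE /= => /andP[aX bX].
  by apply/bigcupP; exists a => //; apply/imsetP; exists b.
apply: leq_trans (subset_leq_card sub) _.
apply: leq_trans; first exact: card_bigcup_le.
rewrite mulnC -sum_nat_const; apply: leq_sum => a aX.
apply: leq_trans (leq_imset_card _ _) _.
apply: zb; apply: cH_in; exact: subsetP XV _ aX.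
Qed.

Lemma card_M : #|M| <= z ^ 2 * #|X|.
Proof.
apply: leq_trans; first exact: card_bigcup_le.
apply: (@leq_trans (\sum_(ab in Tau) z)); first by apply: leq_sum => ab _; exact: B_card.
rewrite sum_nat_const mulnC expnS expn1 -mulnA leq_mul2l card_Tau orbT //.
Qed.


Definition Vh := X :|: \bigcup_(D in M) D.
Definition Eh := restr Vh E.

Lemma M_comps D : D \in M -> D \in compsHX.
Proof. exact: subsetP M_sub D. Qed.

Lemma M_Vh D : D \in M -> D \subset Vh.
Proof. by move=> DM; apply: subset_trans (bigcup_sup D DM) (subsetUr _ _). Qed.

Lemma X_Vh : X \subset Vh.
Proof. exact: subsetUl. Qed.

Lemma Vh_sub : Vh \subset V.
Proof.
apply/subUsetP; split => //; apply/bigcupsP => D /M_comps /compsHX_sub DV.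
by apply: subset_trans DV (subsetDl _ _).
Qed.

Lemma Vh_comp v : v \in Vh -> v \notin X -> exists2 D, D \in M & v \in D.
Proof. by rewrite inE => /orP[->//|/bigcupP[D DM vD]] _; exists D. Qed.

Lemma comps_hat_sub : components (Vh :\: X) (restr (Vh :\: X) Eh) \subset M.
Proof.
apply/subsetP=> _ /imsetP[x /setDP[xVh xX] ->].
have [D DM xD] := Vh_comp xVh xX.
have DH := M_comps DM.
suff -> : [set y in Vh :\: X | connect (restr (Vh :\: X) (restr (Vh :\: X) Eh)) x y] = D by [].
have VhXV : Vh :\: X \subset V :\: X by apply: setSD Vh_sub.
have inD : forall y, y \in D -> y \in Vh :\: X.
  move=> y yD; rewrite inE (subsetP (M_Vh DM) _ yD) andbT.
  by have := subsetP (compsHX_sub DH) _ yD; rewrite inE => /andP[].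
apply/setP=> y; rewrite inE; apply/idP/idP.
  case/andP=> yVh cxy; rewrite (cD_eq DH xD) inE (subsetP VhXV _ yVh) /=.
  apply: connect_sub cxy => u w; rewrite /restr /= => /andP[/andP[/andP[Euw _] /andP[uV wV]] _].
  by apply: connect1; rewrite RXE Euw (subsetP VhXV _ uV) (subsetP VhXV _ wV).
move=> yD; rewrite inD //=.
have cxy : connect RX x y by move: yD; rewrite (cD_eq DH xD) inE => /andP[].
apply: (connect_transfer (W := mem D)) xD cxy => u w; rewrite RXE => /and3P[Euw _ wVX] uD.
have wD := compsHX_edge DH uD wVX Euw.
have /setDP[uVh _] := inD u uD; have /setDP[wVh _] := inD w wD.
by split => //; rewrite /restr /Eh /restr /= Euw uVh wVh !inD.
Qed.


Section Contra.
Variables (S : {set T}) (g : {ffun T -> bool}) (C : {set T}).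
Hypothesis SVh : S \subset Vh.
Hypothesis gP : forall x y, x \in Vh :\: S -> y \in Vh :\: S -> E x y -> g x != g y.
Hypothesis CP : C \in components V E.
Hypothesis hC : #|S :&: C| < #|X :&: C|.

Lemma inVhS x : x \in Vh -> x \notin S -> x \in Vh :\: S.
Proof. by move=> h1 h2; rewrite inE h1 h2. Qed.

Lemma hits D' a b : D' \in M -> tag D' a b -> a \notin S -> b \notin S ->
  (g a != g b) = ~~ p a b -> exists2 s, s \in S & s \in D'.
Proof.
move=> DM tg aS bS hg.
have DH := M_comps DM.
case/and3P: tg => aX bX /existsP[ua /andP[uaD /existsP[ub /andP[ubD /and3P[Eaua Ebub hp]]]]].
case: (boolP [exists s in D', s \in S]) => [/exists_inP[s sD sS]|/exists_inPn nS].
  by exists s.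
exfalso.
have DVh := M_Vh DM.
have DVX := compsHX_sub DH.
have cab : connect RX ua ub by move: ubD; rewrite (cD_eq DH uaD) inE => /andP[].
have key : forall x y, RX x y -> x \in mem D' -> y \in mem D' /\ (g x (+) f x) = (g y (+) f y).
  move=> x y; rewrite RXE => /and3P[Exy xV yV] xD.
  have yD := compsHX_edge DH xD yV Exy.
  split => //.
  have := fP xV yV Exy.
  have := gP (inVhS (subsetP DVh _ xD) (nS _ xD)) (inVhS (subsetP DVh _ yD) (nS _ yD)) Exy.
  by case: (g x); case: (g y); case: (f x); case: (f y).
have [hc _] := connect_inv key uaD cab.
have h1 := gP (inVhS (subsetP X_Vh _ aX) aS) (inVhS (subsetP DVh _ uaD) (nS _ uaD)) Eaua.
have h2 := gP (inVhS (subsetP X_Vh _ bX) bS) (inVhS (subsetP DVh _ ubD) (nS _ ubD)) Ebub.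
move: hp hg hc h1 h2; case: (p a b); case: (g a); case: (g b); case: (g ua); case: (g ub);
  by case: (f ua); case: (f ub).
Qed.

Lemma tag_in D a b : tag D a b -> exists2 ua, ua \in D & E a ua.
Proof.
by case/and3P=> _ _ /existsP[ua /andP[uaD /existsP[ub /andP[_ /and3P[E1 _ _]]]]]; exists ua.
Qed.

Lemma no_conflict_tag D a b : D \in compsHX -> D \notin M -> D \subset C ->
  tag D a b -> a \notin S -> b \notin S -> (g a != g b) = ~~ p a b -> False.
Proof.
move=> DH DM DC tg aS bS hg.
have Tt := tag_Tau DH tg.
have DA : D \in A (a, b) by rewrite inE DH tg.
have DB : D \notin B (a, b) by apply: contra DM => DB; apply/bigcupP; exists (a, b).
have hz := B_full DA DB.
have aC : a \in C.
  have [ua uaD Eaua] := tag_in tg.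
  by apply: comps_edge CP (subsetP DC _ uaD) _; rewrite sE.
pose phi (D' : {set T}) := odflt a [pick y in S :&: D'].
have phiP : forall D', D' \in B (a, b) -> phi D' \in S :&: D'.
  move=> D' D'B.
  have D'M : D' \in M by apply/bigcupP; exists (a, b).
  have := subsetP (B_sub (a, b)) _ D'B; rewrite /A inE => /andP[_ tg'].
  have [s sS sD'] := hits D'M tg' aS bS hg.
  rewrite /phi; case: pickP => [y //|/(_ s)]; by rewrite inE sS sD'.
have phiC : forall D', D' \in B (a, b) -> phi D' \in S :&: C.
  move=> D' D'B; have := phiP _ D'B; rewrite !inE => /andP[-> yD'] /=.
  have := subsetP (B_sub (a, b)) _ D'B; rewrite /A inE => /andP[D'H tg'].
  have [ua' ua'D Eaua'] := tag_in tg'.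
  have ua'C := comps_edge CP aC Eaua'.
  exact: subsetP (comps_D CP D'H ua'C ua'D) _ yD'.
have inj : {in B (a, b) &, injective phi}.
  move=> D1 D2 D1B D2B e12.
  have := phiP _ D1B; have := phiP _ D2B; rewrite !inE e12 => /andP[_ y2] /andP[_ y1].
  have := subsetP (B_sub (a, b)) _ D1B; rewrite /A inE => /andP[D1H _].
  have := subsetP (B_sub (a, b)) _ D2B; rewrite /A inE => /andP[D2H _].
  by rewrite (cD_eq D1H y1) -(cD_eq D2H y2).
have : #|B (a, b)| <= #|S :&: C|.
  rewrite -(card_in_imset inj); apply: subset_leq_card.
  by apply/subsetP=> _ /imsetP[D' D'B ->]; apply: phiC.
rewrite hz => hzs.
have := zb CP.
by move=> hXC; have := leq_ltn_trans hzs (leq_trans hC hXC); rewrite ltnn.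
Qed.

Lemma consistent D a b ua ub : D \in compsHX -> D \notin M -> D \subset C ->
  a \in X -> a \notin S -> b \in X -> b \notin S -> ua \in D -> ub \in D ->
  E a ua -> E b ub -> f ua (+) g a = f ub (+) g b.
Proof.
move=> DH DM DC aX aS bX bS uaD ubD Eaua Ebub.
case: (boolP ((f ua != f ub) == p a b)) => hq.
  have tg : tag D a b.
    rewrite /tag aX bX /=; apply/existsP; exists ua; rewrite uaD /=.
    by apply/existsP; exists ub; rewrite ubD Eaua Ebub hq.
  case: (boolP ((g a != g b) == ~~ p a b)) => [/eqP hg|hng].
    by exfalso; exact: (no_conflict_tag DH DM DC tg aS bS hg).
  move: hq hng; case: (p a b); case: (g a); case: (g b); case: (f ua); by case: (f ub).
case: (eqVneq a b) => [eab|nab].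
  subst b; move: hq; rewrite p_refl; case: (g a); case: (f ua); by case: (f ub).
have pba : p b a = ~~ p a b by rewrite p_anti // eq_sym.
have tg : tag D b a.
  rewrite /tag aX bX /=; apply/existsP; exists ub; rewrite ubD /=.
  by apply/existsP; exists ua; rewrite uaD Eaua Ebub pba; move: hq; case: (p a b); case: (f ua); case: (f ub).
case: (boolP ((g b != g a) == ~~ p b a)) => [/eqP hg|hng].
  by exfalso; exact: (no_conflict_tag DH DM DC tg bS aS hg).
move: hq hng; rewrite pba; case: (p a b); case: (g a); case: (g b); case: (f ua); by case: (f ub).
Qed.

Definition bD (D : {set T}) :=
  [exists x, exists u, [&& x \in X, x \notin S, u \in D, E x u & f u == g x]].

Lemma flip D x u : D \in compsHX -> D \notin M -> D \subset C ->
  x \in X -> x \notin S -> u \in D -> E x u -> (f u (+) bD D) != g x.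
Proof.
move=> DH DM DC xX xS uD Exu.
case bDv: (bD D).
  move: bDv => /existsP[x0 /existsP[u0 /and5P[x0X x0S u0D E0 h0]]].
  have := consistent DH DM DC x0X x0S xX xS u0D uD E0 Exu.
  by move: h0; case: (f u0); case: (g x0); case: (f u); case: (g x).
rewrite addbF; apply: contraFN bDv => h; apply/existsP; exists x; apply/existsP; exists u.
by rewrite xX xS uD Exu h.
Qed.

Definition col := [ffun w => if w \in C then (if w \in Vh then g w else f w (+) bD (cD w)) else f w].

Lemma mixed w w' : w \in C -> w' \in C -> w \notin S -> w' \notin S -> w \in Vh ->
  w' \notin Vh -> E w w' -> col w != col w'.
Proof.
move=> wC w'C wS w'S wVh w'Vh Eww'.
have /andP[wV w'V] := EV Eww'.
have w'X : w' \notin X by apply: contra w'Vh => h; exact: (subsetP X_Vh _ h).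
have w'VX : w' \in V :\: X by rewrite inE w'X w'V.
have DH := cD_in w'VX.
have w'D : w' \in cD w' by apply: cls_self.
have DM : cD w' \notin M by apply: contra w'Vh => DM; apply: subsetP (M_Vh DM) _ w'D.
have DC := comps_D CP DH w'C w'D.
rewrite !ffunE wC w'C wVh (negbTE w'Vh).
case wX: (w \in X).
  by rewrite eq_sym; apply: flip.
have wVX : w \in V :\: X by rewrite inE wX wV.
have [D'' D''M wD''] := Vh_comp wVh (negbT wX).
exfalso; move/negP: DM; apply.
by rewrite (cD_edge wVX w'VX Eww') -(cD_eq (M_comps D''M) wD'').
Qed.

Definition S2 := (S :&: C) :|: (X :\: C).

Lemma bipS2 x y : x \in V :\: S2 -> y \in V :\: S2 -> E x y -> col x != col y.
Proof.
have hS2 : forall v, v \in V :\: S2 -> (v \in C -> v \notin S) /\ (v \notin C -> v \notin X).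
  move=> v; rewrite !inE => /andP[hv _]; split => hc.
    by apply: contra hv => vS; rewrite vS hc.
  by apply: contra hv => vX; rewrite vX hc orbT.
move=> xS2 yS2 Exy.
have [hx1 hx2] := hS2 _ xS2; have [hy1 hy2] := hS2 _ yS2.
have /andP[xV yV] := EV Exy.
case xC: (x \in C).
  have yC := comps_edge CP xC Exy.
  have xS := hx1 xC; have yS := hy1 yC.
  case xVh: (x \in Vh); case yVh: (y \in Vh).
  - by rewrite !ffunE xC yC xVh yVh; apply: gP => //; apply: inVhS.
  - by apply: mixed => //; rewrite yVh.
  - by rewrite eq_sym; apply: mixed => //; [rewrite xVh | rewrite sE].
  - have xX : x \notin X by apply: contraFN xVh => h; exact: (subsetP X_Vh _ h).
    have yX : y \notin X by apply: contraFN yVh => h; exact: (subsetP X_Vh _ h).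
    have xVX : x \in V :\: X by rewrite inE xX xV.
    have yVX : y \in V :\: X by rewrite inE yX yV.
    rewrite !ffunE xC yC xVh yVh (cD_edge xVX yVX Exy).
    by have := fP xVX yVX Exy; case: (f x); case: (f y); case: (bD _).
have yC : y \notin C.
  apply/negP => yC; have Eyx : E y x by rewrite sE.
  by have := comps_edge CP yC Eyx; rewrite xC.
have xX := hx2 (negbT xC); have yX := hy2 yC.
rewrite !ffunE xC (negbTE yC); apply: fP => //; rewrite inE ?xX ?yX ?xV ?yV //.
Qed.

Lemma S2_sub : S2 \subset V.
Proof.
apply/subUsetP; split.
  by apply: subset_trans (subsetIl _ _) (subset_trans SVh Vh_sub).
by apply: subset_trans (subsetDl _ _) XV.
Qed.

Lemma S2_card : #|S2| < #|X|.
Proof.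
apply: leq_ltn_trans (leq_card_setU _ _).1 _.
by rewrite -(cardsID C X) ltn_add2r.
Qed.

Lemma S2_bip : bipartite (del_V V S2) (del_E V E S2).
Proof.
apply/existsP; exists col; apply/forall_inP => x xV; apply/forall_inP => y yV.
by apply/implyP; rewrite /del_E /restr /= => /andP[Exy _]; apply: bipS2.
Qed.

End Contra.

Hypothesis octH : forall S : {set T}, S \subset V ->
  bipartite (del_V V S) (del_E V E S) -> #|X| <= #|S|.

Lemma part_V : partition (components V E) V.
Proof.
apply: equivalence_partitionP => x y w _ _ _; split; first exact: connect0.
move=> cxy; apply/idP/idP => h.
  by have := RH_sym x y; rewrite /RH cxy => /esym cyx; apply: connect_trans cyx h.
exact: connect_trans cxy h.
Qed.

Lemma sumY (Y : {set T}) : #|Y :&: V| = \sum_(C in components V E) #|Y :&: C|.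
Proof.
transitivity (\sum_(x in V | x \in Y) 1).
  by rewrite sum1dep_card; apply: eq_card => x; rewrite !inE andbC.
rewrite (set_partition_big_cond _ part_V); apply: eq_bigr => C _.
by rewrite sum1dep_card; apply: eq_card => x; rewrite !inE andbC.
Qed.

Lemma oct_hat : #|X| <= oct Vh Eh.
Proof.
apply: oct_ge; last exact: max_card.
move=> S SVh /existsP[g /forall_inP hg].
rewrite leqNgt; apply/negP => hlt.
have gP : forall x y, x \in Vh :\: S -> y \in Vh :\: S -> E x y -> g x != g y.
  move=> x y xS yS Exy; move: (hg x xS) => /forall_inP/(_ y yS)/implyP; apply.
  have /setDP[xVh _] := xS; have /setDP[yVh _] := yS.
  by rewrite /del_E /restr /Eh /restr /= Exy xVh yVh xS yS.
have : ~~ [forall C in components V E, #|X :&: C| <= #|S :&: C|].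
  apply/negP => /forall_inP h.
  have h2 : #|X| <= #|S :&: V|.
    rewrite -{1}(setIidPl XV) !sumY; apply: leq_sum => C CP; exact: h.
  have := leq_trans h2 (subset_leq_card (subsetIl S V)).
  by rewrite leqNgt hlt.
rewrite negb_forall_in => /exists_inP[C CP]; rewrite -ltnNge => hC.
have := octH (S2_sub C SVh) (S2_bip gP CP hC).
by rewrite leqNgt (S2_card hC).
Qed.

End Main.


Theorem mainTheorem6 (T : finType) (e : rel T) (XC : {set T}) (z : nat)
    (V : {set T}) (E : rel T) :
  simple_graph e ->
  certificate e XC z V E ->
  exists (Vh : {set T}) (Eh : rel T),
    [/\ subgraph_of V E Vh Eh,
        certificate e XC z Vh Eh &
        #|components (del_V Vh XC) (del_E Vh Eh XC)| <= z ^ 2 * #|XC|].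
Proof.
move=> _ [[_ [sE hEV]] bipX octeq zb].
have EV : forall x y, E x y -> (x \in V) && (y \in V).
  by move=> x y /hEV /and3P[_ -> ->].
have XV : XC \subset V.
  have eqD : V :\: (XC :&: V) = V :\: XC.
    by apply/setP=> x; rewrite !inE; case: (x \in V); rewrite ?andbT ?andbF.
  have h1 : #|XC| <= #|XC :&: V|.
    by rewrite -octeq; apply: oct_le; [exact: subsetIr | rewrite /del_V /del_E eqD].
  have [_ heq] := subset_leqif_cards (subsetIl XC V).
  have : XC :&: V == XC by rewrite -heq eqn_leq h1 subset_leq_card // subsetIl.
  by move/eqP <-; exact: subsetIr.
move: (bipX) => /existsP[f /forall_inP hf].
have fP : forall x y, x \in V :\: XC -> y \in V :\: XC -> E x y -> f x != f y.
  move=> x y xV yV Exy; move: (hf x xV) => /forall_inP/(_ y yV)/implyP; apply.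
  by rewrite /del_E /restr /= Exy xV yV.
have octH : forall S : {set T}, S \subset V ->
    bipartite (del_V V S) (del_E V E S) -> #|XC| <= #|S|.
  by move=> S SV bS; rewrite -octeq; apply: oct_le.
have VhV : Vh XC z V E f \subset V by apply: Vh_sub.
have XVh : XC \subset Vh XC z V E f by apply: X_Vh.
exists (Vh XC z V E f), (Eh XC z V E f); split.
- split => //; split; first exact: restr_sym.
  by move=> x y; rewrite /Eh /restr /=.
- have bipH : bipartite (del_V (Vh XC z V E f) XC) (del_E (Vh XC z V E f) (Eh XC z V E f) XC).
    apply/existsP; exists f; apply/forall_inP => x xV; apply/forall_inP => y yV.
    apply/implyP; rewrite /del_E /Eh /restr /= => /andP[/andP[Exy _] _].
    by apply: fP => //; [apply: subsetP (setSD _ VhV) _ xV | apply: subsetP (setSD _ VhV) _ yV].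
  split => //.
  + split; first exact: subsetT; split; first exact: restr_sym.
    move=> x y; rewrite /Eh /restr /= => /and3P[Exy -> ->].
    by have /and3P[-> _ _] := hEV _ _ Exy.
  + apply/eqP; rewrite eqn_leq; apply/andP; split.
      exact: oct_le.
    exact: oct_hat.
  + move=> C /imsetP[c cVh ->].
    have cV := subsetP VhV _ cVh.
    apply: leq_trans (zb [set y in V | connect (restr V E) c y] _); last first.
      by apply/imsetP; exists c.
    apply: subset_leq_card; apply: setIS; apply/subsetP=> y /setIdP[yVh cy]; rewrite inE.
    rewrite (subsetP VhV _ yVh) /=; apply: connect_sub cy => u w.
    rewrite /Eh /restr /= => /andP[/andP[Euw _] /andP[uV wV]].
    by apply: connect1; rewrite /= Euw (subsetP VhV _ uV) (subsetP VhV _ wV).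
- have hM : #|M XC z V E f| <= z ^ 2 * #|XC| by apply: card_M.
  have hs : components (del_V (Vh XC z V E f) XC) (del_E (Vh XC z V E f) (Eh XC z V E f) XC)
     \subset M XC z V E f by apply: comps_hat_sub.
  exact: leq_trans (subset_leq_card hs) hM.
Qed.
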